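(* Let $p=(a,b,c)\in P$. Then no trajectory of the flow of $F_p$ enters the set $B=\{(x,y,z)\in\mathbb{R}^3: z<-b\}$.
   Context: For $p=(a,b,c)\in\mathbb{R}^3$, $F_p$ is the Rössler vector field $\dot x=-y-z,\ \dot y=x+ay,\ \dot z=bx+z(x-c)$ on $\mathbb{R}^3$. $P\subseteq\mathbb{R}^3$ is an open set of parameters such that for every $p=(a,b,c)\in P$: $a,b\in(0,1)$, $c>1$; $F_p$ has exactly two fixed points $P_{In}=(0,0,0)$ and $P_{Out}=(c-ab,b-\frac{c}{a},\frac{c}{a}-b)$, both saddle-foci, $P_{In}$ with one-dimensional stable manifold and $P_{Out}$ with one-dimensional unstable manifold; and at least one of the saddle indices at $P_{In},P_{Out}$ is $<1$. *)

(* Defs.v *)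
From Stdlib Require Import Reals.
From Coquelicot Require Import Coquelicot.
Open Scope R_scope.

Definition R3 := (R * R * R)%type.

Definition rossler (a b c : R) (v : R3) : R3 :=
  let '(x, y, z) := v in (- y - z, x + a * y, b * x + z * (x - c)).

Definition P_In : R3 := (0, 0, 0).
Definition P_Out (a b c : R) : R3 := (c - a * b, b - c / a, c / a - b).

Definition det3 (m11 m12 m13 m21 m22 m23 m31 m32 m33 : R) : R :=
  m11 * (m22 * m33 - m23 * m32) - m12 * (m21 * m33 - m23 * m31)
  + m13 * (m21 * m32 - m22 * m31).

(** Characteristic polynomial det(t I - DF_p(v)) of the Jacobian of F_p at v.
    DF_p(x,y,z) = [[0,-1,-1],[1,a,0],[b+z,0,x-c]]. *)
Definition jac_charpoly (a b c : R) (v : R3) (t : R) : R :=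
  let '(x, y, z) := v in
  det3 (t - 0) (0 - (-1)) (0 - (-1))
       (0 - 1) (t - a) (0 - 0)
       (0 - (b + z)) (0 - 0) (t - (x - c)).

(** v is a saddle-focus of F_p with one-dimensional stable manifold and saddle
    index nu: the Jacobian has a real eigenvalue lam < 0 and a non-real pair
    rho +- i omega with rho > 0; nu = - rho / lam. *)
Definition saddle_focus_1d_stable (a b c : R) (v : R3) (nu : R) : Prop :=
  exists lam rho om : R, lam < 0 /\ 0 < rho /\ om <> 0 /\
    (forall t, jac_charpoly a b c v t = (t - lam) * ((t - rho) ^ 2 + om ^ 2)) /\
    nu = - rho / lam.

(** v is a saddle-focus of F_p with one-dimensional unstable manifold and
    saddle index nu: real eigenvalue lam > 0, non-real pair rho +- i omega with
    rho < 0; nu = - rho / lam. *)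
Definition saddle_focus_1d_unstable (a b c : R) (v : R3) (nu : R) : Prop :=
  exists lam rho om : R, 0 < lam /\ rho < 0 /\ om <> 0 /\
    (forall t, jac_charpoly a b c v t = (t - lam) * ((t - rho) ^ 2 + om ^ 2)) /\
    nu = - rho / lam.

Definition param_conditions (p : R3) : Prop :=
  let '(a, b, c) := p in
  0 < a < 1 /\ 0 < b < 1 /\ 1 < c /\
  (forall v : R3, rossler a b c v = (0, 0, 0) <-> (v = P_In \/ v = P_Out a b c)) /\
  P_In <> P_Out a b c /\
  exists nuIn nuOut : R,
    saddle_focus_1d_stable a b c P_In nuIn /\
    saddle_focus_1d_unstable a b c (P_Out a b c) nuOut /\
    (nuIn < 1 \/ nuOut < 1).

Definition open3 (P : R3 -> Prop) : Prop :=
  forall a b c, P (a, b, c) -> exists eps : R, 0 < eps /\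
    forall a' b' c', Rabs (a' - a) < eps -> Rabs (b' - b) < eps ->
      Rabs (c' - c) < eps -> P (a', b', c').

Definition is_solution (a b c : R) (alpha beta : Rbar) (x y z : R -> R) : Prop :=
  forall t : R, Rbar_lt alpha t -> Rbar_lt t beta ->
    is_derive x t (- y t - z t) /\
    is_derive y t (x t + a * y t) /\
    is_derive z t (b * x t + z t * (x t - c)).

(* Main.v *)
Require Import Defs.
From Stdlib Require Import Reals Lra.
From Coquelicot Require Import Coquelicot.
Open Scope R_scope.

Lemma cont_eps (f : R -> R) (s : R) : continuity_pt f s ->
  forall eps, 0 < eps -> exists d, 0 < d /\ forall t, Rabs (t - s) < d -> Rabs (f t - f s) < eps.
Proof.
  intros Hc eps He. destruct (Hc eps He) as [d [Hd H]]. exists d; split; auto.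
  intros t Ht. destruct (Req_dec t s) as [->|Hne].
  - rewrite Rminus_diag, Rabs_R0; lra.
  - apply (H t). split; [split; [exact I| auto] | exact Ht].
Qed.

Theorem lemma2p6 (P : R3 -> Prop) (HPopen : open3 P)
  (HP : forall p, P p -> param_conditions p)
  (a b c : R) (Hp : P (a, b, c))
  (alpha beta : Rbar) (x y z : R -> R)
  (Hsol : is_solution a b c alpha beta x y z)
  (t0 t1 : R) (Ht0 : Rbar_lt alpha t0) (Ht1 : Rbar_lt t1 beta) (Ht01 : t0 <= t1) :
  ~ (z t0 < - b) -> ~ (z t1 < - b).
Proof.
  intros H0 H1.
  pose proof (HP _ Hp) as Hpc. simpl in Hpc.
  destruct Hpc as [Ha [Hb [Hc _]]].
  assert (Hder : forall t, t0 <= t <= t1 -> derivable_pt_lim z t (b * x t + z t * (x t - c))).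
  { intros t Ht. apply is_derive_Reals. apply (Hsol t).
    - destruct alpha as [al| |]; simpl in *; auto; lra.
    - destruct beta as [be| |]; simpl in *; auto; lra. }
  assert (Hcont : forall t, t0 <= t <= t1 -> continuity_pt z t).
  { intros t Ht. apply derivable_continuous_pt. exists (b * x t + z t * (x t - c)). apply Hder; auto. }
  set (E := fun t => t0 <= t <= t1 /\ -b <= z t).
  assert (HB : bound E). { exists t1. intros t [Ht _]. lra. }
  assert (HE : exists t, E t). { exists t0. split; [lra|]. lra. }
  destruct (completeness E HB HE) as [s [Hub Hlub]].
  assert (Hs0 : t0 <= s). { apply Hub. split; [lra|lra]. }
  assert (Hs1 : s <= t1). { apply Hlub. intros t [Ht _]. lra. }
  assert (Hzs : -b <= z s).
  { destruct (Rle_or_lt (-b) (z s)) as [h|h]; auto. exfalso.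
    destruct (cont_eps z s (Hcont s (conj Hs0 Hs1)) (-b - z s)) as [d [Hd Hn]]; [lra|].
    destruct (Rle_or_lt s (s - d/2)) as [h2|h2]; [lra|].
    assert (~ is_upper_bound E (s - d/2)) as Hnub. { intro HH. apply Hlub in HH. lra. }
    apply Hnub. intros e He. destruct (Rle_or_lt e (s - d/2)) as [h3|h3]; auto.
    exfalso. assert (e <= s) by (apply Hub; auto).
    destruct He as [_ He]. specialize (Hn e). assert (Hes : Rabs (e - s) < d).
    { rewrite Rabs_left1; lra. }
    apply Hn in Hes. rewrite Rabs_lt_between in Hes. lra. }
  assert (Hst : s < t1). { destruct (Req_dec s t1); [subst; lra| lra]. }
  assert (Hafter : forall t, s < t <= t1 -> z t < -b).
  { intros t Ht. destruct (Rlt_or_le (z t) (-b)) as [h|h]; auto.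
    assert (t <= s) by (apply Hub; split; [lra|lra]). lra. }
  assert (Hzs2 : z s = -b).
  { destruct (Req_dec (z s) (-b)) as [h|h]; auto. exfalso.
    destruct (cont_eps z s (Hcont s (conj Hs0 Hs1)) (z s + b)) as [d [Hd Hn]]; [lra|].
    set (t := Rmin (s + d/2) t1).
    assert (Hst2 : s < t <= t1). { unfold t. apply Rmin_case_strong; intros; lra. }
    assert (t <= s + d/2) by (unfold t; apply Rmin_l).
    specialize (Hn t). assert (Hts : Rabs (t - s) < d) by (rewrite Rabs_right; lra).
    apply Hn in Hts. rewrite Rabs_lt_between in Hts.
    specialize (Hafter t Hst2). lra. }
  pose proof (Hder s (conj Hs0 Hs1)) as Hd.
  rewrite Hzs2 in Hd.
  assert (Hl : b * x s + - b * (x s - c) = b * c) by ring.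
  rewrite Hl in Hd.
  destruct (Hd (b * c)) as [d Hdd]. { apply Rmult_lt_0_compat; lra. }
  set (h := Rmin (d/2) (t1 - s)).
  assert (Hd0 : 0 < d) by apply (cond_pos d).
  assert (0 < h <= t1 - s). { unfold h. apply Rmin_case_strong; intros; lra. }
  assert (h <= d/2) by (unfold h; apply Rmin_l).
  specialize (Hdd h). assert (Hh0 : h <> 0) by lra.
  assert (Hhd : Rabs h < d) by (rewrite Rabs_right; lra).
  specialize (Hdd Hh0 Hhd). rewrite Hzs2 in Hdd.
  rewrite Rabs_lt_between in Hdd.
  assert (Hq : 0 < (z (s + h) - - b) / h) by lra.
  specialize (Hafter (s + h) ltac:(lra)).
  assert ((z (s + h) - - b) / h < 0).
  { unfold Rdiv. apply Rmult_neg_pos; [lra| apply Rinv_0_lt_compat; lra]. }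
  lra.
Qed.
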